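(* Let $R$ be a finite chain ring, $r\ge1$, $l\ge1$, and let $A_1,\dots,A_l\subseteq R$ be pairwise disjoint sets with $|A_i|=r+1$ such that $A=\bigcup_{i=1}^lA_i$ is well-conditioned. Let $g\in R[x]$ be an $(r,l)$-good polynomial on the blocks $A_1,\dots,A_l$. Let $1\le t\le l$, $n=(r+1)l$, $K=rt$. For $a=(a_{i,j})_{0\le i\le r-1,\,0\le j\le t-1}\in R^K$ put $$f_a(x)=\sum_{i=0}^{r-1}\sum_{j=0}^{t-1}a_{i,j}\,g(x)^jx^i,$$ and let $\mathcal C=\{(f_a(\alpha))_{\alpha\in A}: a\in R^K\}\subseteq R^n$ (coordinates indexed by $A$ in a fixed order). Then $\mathcal C$ is a free $R$-linear code of length $n$ and rank $K$ (so $|\mathcal C|=|R|^K$), every coordinate $\alpha\in A_j$ has the recovering set $A_j\setminus\{\alpha\}$ (so $\mathcal C$ has locality $r$), and its minimum distance is $$d=n-K-\frac{K}{r}+2 .$$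
   Context: A finite chain ring is a finite commutative local ring whose ideals are totally ordered by inclusion. $N(R)$ denotes the group of units of $R$. A subset $T\subseteq N(R)$ is subtractive if $a-b\in N(R)$ for all distinct $a,b\in T$. A set $\{a_1,\dots,a_n\}\subseteq R$ is well-conditioned if either it is a subtractive subset of $N(R)$, or for some $i$ the set $\{a_1,\dots,a_n\}\setminus\{a_i\}$ is a subtractive subset of $N(R)$ and $a_i$ is a zero divisor (or $a_i=0$). Given pairwise disjoint subsets $A_1,\dots,A_l\subseteq R$ of size $r+1$, a polynomial $g\in R[x]$ is $(r,l)$-good on the blocks $A_1,\dots,A_l$ if it has degree $r+1$, its leading coefficient is a unit, and it is constant on each $A_i$. A coordinate $i$ has locality $r$ if there is a set $S_i$ of at most $r$ other coordinates with $|\mathcal C_{S_i}|=|\mathcal C_{S_i\cup\{i\}}|$ (puncturing to the indicated coordinates). *)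

(* Defs.v *)
From HB Require Import structures.
From mathcomp Require Import all_boot all_order all_algebra.
Set Implicit Arguments. Unset Strict Implicit. Unset Printing Implicit Defensive.
Import Order.TTheory GRing.Theory.
Local Open Scope ring_scope.

Section ChainRings.
Variable R : finComUnitRingType.

Definition is_ideal (I : {set R}) : Prop :=
  0 \in I /\ {in I &, forall x y, x + y \in I} /\
  (forall a : R, {in I, forall x, a * x \in I}).

Definition proper_ideal (I : {set R}) : Prop := is_ideal I /\ (1 \notin I).

Definition local_ring : Prop :=
  exists M : {set R}, proper_ideal M /\
    forall I, proper_ideal I -> I \subset M.

Definition chain_ring : Prop :=
  local_ring /\
  forall I J : {set R}, is_ideal I -> is_ideal J -> I \subset J \/ J \subset I.

Definition subtractive (T : {set R}) : Prop :=
  (forall a, a \in T -> a \is a GRing.unit) /\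
  (forall a b, a \in T -> b \in T -> a != b -> (a - b) \is a GRing.unit).

Definition zero_divisor (a : R) : Prop := exists b : R, b != 0 /\ a * b = 0.

Definition well_conditioned (A : {set R}) : Prop :=
  subtractive A \/
  exists2 a, a \in A & subtractive (A :\ a) /\ (zero_divisor a \/ a = 0).

Definition good_poly (r l : nat) (Ab : 'I_l -> {set R}) (g : {poly R}) : Prop :=
  size g = r.+2 /\ lead_coef g \is a GRing.unit /\
  forall i, {in Ab i &, forall x y, g.[x] = g.[y]}.

Definition wt n (c : 'rV[R]_n) : nat := #|[set k : 'I_n | c 0 k != 0]|.

Definition free_code_of_rank n (C : {set 'rV[R]_n}) (K : nat) : Prop :=
  exists B : 'I_K -> 'rV[R]_n,
    (forall c, c \in C <-> exists u : 'I_K -> R, c = \sum_(k < K) u k *: B k) /\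
    (forall u : 'I_K -> R, \sum_(k < K) u k *: B k = 0 -> forall k, u k = 0).

Definition puncture n (C : {set 'rV[R]_n}) (S : {set 'I_n}) : {set 'rV[R]_n} :=
  [set \row_(k < n) (if k \in S then c 0 k else 0) | c : 'rV[R]_n in C].

Definition recovering_set n (C : {set 'rV[R]_n}) (i : 'I_n) (S : {set 'I_n}) : Prop :=
  i \notin S /\ #|puncture C S| = #|puncture C (i |: S)|.

Definition has_locality n (C : {set 'rV[R]_n}) (r : nat) : Prop :=
  forall i : 'I_n, exists S : {set 'I_n}, (#|S| <= r)%N /\ recovering_set C i S.

Definition min_distance_is n (C : {set 'rV[R]_n}) (d : nat) : Prop :=
  (exists2 c, c \in C & c != 0 /\ wt c = d) /\
  (forall c, c \in C -> c != 0 -> (d <= wt c)%N).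

Definition fpoly (r t : nat) (g : {poly R}) (a : 'I_r * 'I_t -> R) : {poly R} :=
  \sum_(i < r) \sum_(j < t) a (i, j) *: (g ^+ j * 'X^i).

End ChainRings.

(* Main.v *)
Require Import Defs.
From mathcomp Require Import all_boot all_order all_algebra.
From mathcomp Require Import zify ring.
Import GRing.Theory.
Local Open Scope ring_scope.
Set Implicit Arguments. Unset Strict Implicit. Unset Printing Implicit Defensive.

Lemma nonunit_in_M (R : finComUnitRingType) (M : {set R}) :
  Defs.proper_ideal M -> (forall I, Defs.proper_ideal I -> I \subset M) ->
  forall x : R, x \isn't a GRing.unit -> x \in M.
Proof.
move=> _ hmax x hx.
pose I := [set x * y | y : R].
have hI : Defs.proper_ideal I.
  split; [split; [|split]|].
  - by apply/imsetP; exists 0 => //; rewrite mulr0.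
  - move=> u v /imsetP[a _ ->] /imsetP[b _ ->]; apply/imsetP; exists (a + b) => //.
    by rewrite mulrDr.
  - move=> c u /imsetP[a _ ->]; apply/imsetP; exists (c * a) => //.
    by rewrite mulrCA.
  - apply/imsetP => -[y _ h]; move/negP: hx; apply.
    by apply/unitrPr; exists y; rewrite -h.
have := hmax I hI; move/subsetP; apply; apply/imsetP; exists 1 => //.
by rewrite mulr1.
Qed.

Lemma local_sub_unit (R : finComUnitRingType) (a b : R) :
  local_ring R -> a \isn't a GRing.unit -> b \is a GRing.unit ->
  (a - b) \is a GRing.unit.
Proof.
move=> [M [hM hmax]] ha hb; apply/negPn/negP => hab.
have aM := nonunit_in_M hM hmax ha.
have abM := nonunit_in_M hM hmax hab.
case: hM => [[h0 [hadd hmul]] h1]; move/negP: h1; apply.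
have bM : b \in M.
  have -> : b = a + (-1) * (a - b) by rewrite mulN1r opprB addrC subrK.
  by apply: hadd => //; apply: hmul.
by rewrite -(mulVr hb); apply: hmul.
Qed.

Lemma wc_unit_diff (R : finComUnitRingType) (A : {set R}) :
  local_ring R -> well_conditioned A ->
  {in A &, forall x y, x != y -> (x - y) \is a GRing.unit}.
Proof.
move=> hloc [[_ hs] | [a aA [[hu hs] hz]]] x y xA yA xy; first exact: hs.
have anu : a \isn't a GRing.unit.
  case: hz => [[b [bn0 hab]] | ->]; last by rewrite unitr0.
  apply/negP => ua; move/negP: bn0; apply.
  by rewrite -(mulKr ua b) hab mulr0.
have hin z : z \in A -> z != a -> z \in A :\ a by move=> zA za; rewrite !inE za.
have [xa|xa] := eqVneq x a; have [ya|ya] := eqVneq y a.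
- by rewrite xa ya eqxx in xy.
- by rewrite xa; apply: local_sub_unit => //; apply: hu; apply: hin.
- rewrite ya -opprB unitrN; apply: local_sub_unit => //; apply: hu; exact: hin.
- by apply: hs => //; apply: hin.
Qed.

Lemma uniq_roots_of (R : finComUnitRingType) (A : {set R}) (s : seq R) :
  {in A &, forall x y, x != y -> (x - y) \is a GRing.unit} ->
  uniq s -> {subset s <= A} -> uniq_roots s.
Proof.
move=> hU; elim: s => [|x s IH] //= /andP[xs us] sA.
apply/andP; split; last by apply: IH => // z zs; apply: sA; rewrite inE zs orbT.
apply/allP => y ys; rewrite /diff_roots; apply/andP; split; first by rewrite mulrC.
apply: hU.
- by apply: sA; rewrite inE ys orbT.
- by apply: sA; rewrite inE eqxx.
- by apply: contraNneq xs => <-.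
Qed.

Lemma card_bigcup_seq (T I : finType) (F : I -> {set T}) (s : seq I) :
  uniq s -> (forall i j, i \in s -> j \in s -> i != j -> [disjoint F i & F j]) ->
  #|\bigcup_(i <- s) F i| = (\sum_(i <- s) #|F i|)%N.
Proof.
elim: s => [|x s IH] /=; first by rewrite !big_nil cards0.
move=> /andP[xs us] hd; rewrite !big_cons.
rewrite -IH //; last by move=> i j hi hj; apply: hd; rewrite inE ?hi ?hj orbT.
apply/eqP; rewrite (leq_card_setU _ _).2.
rewrite big_seq; apply: (big_ind (fun B : {set T} => [disjoint F x & B])).
- by rewrite -setI_eq0 setI0.
- by move=> B1 B2; rewrite -!setI_eq0 setIUr => /eqP-> /eqP->; rewrite setU0.
move=> i hi; apply: hd; rewrite ?inE ?eqxx ?hi ?orbT //.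
by apply/eqP => xi; rewrite xi hi in xs.
Qed.
Lemma fpoly_pair (R : finComUnitRingType) r t (g : {poly R}) (a : 'I_r * 'I_t -> R) :
  fpoly g a = \sum_(p : 'I_r * 'I_t) a p *: (g ^+ p.2 * 'X^(p.1)).
Proof. by rewrite /fpoly pair_big /=; apply: eq_bigr => -[i j]. Qed.

Lemma horner_fpoly (R : finComUnitRingType) r t (q : {poly R}) (a : 'I_r * 'I_t -> R) y :
  (fpoly q a).[y] = \sum_(p : 'I_r * 'I_t) a p * (q.[y] ^+ p.2 * y ^+ p.1).
Proof.
rewrite fpoly_pair horner_sum; apply: eq_bigr => p _.
by rewrite hornerZ hornerM hornerXn horner_exp.
Qed.

Lemma fpoly_const (R : finComUnitRingType) r t (q : {poly R}) (a : 'I_r * 'I_t -> R) y :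
  (fpoly q a).[y] = (fpoly (q.[y])%:P a).[y].
Proof. by rewrite !horner_fpoly; apply: eq_bigr => p _; rewrite hornerC. Qed.

Lemma size_fpoly (R : finComUnitRingType) r t (q : {poly R}) (a : 'I_r * 'I_t -> R) :
  (size (fpoly q a) <= (size q).-1 * t.-1 + r)%N.
Proof.
rewrite fpoly_pair; apply: (big_ind (fun p : {poly R} => size p <= (size q).-1 * t.-1 + r)%N).
- by rewrite size_poly0.
- move=> p1 p2 h1 h2; apply: leq_trans (size_polyD _ _) _; by rewrite geq_max h1 h2.
move=> [i j] _ /=; apply: leq_trans (size_scale_leq _ _) _.
apply: leq_trans (size_polyMleq _ _) _; rewrite size_polyXn.
have h1 := size_poly_exp_leq q j.
have hi := ltn_ord i; have hj := ltn_ord j.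
have hj' : (j <= t.-1)%N by lia.
have := leq_mul (leqnn (size q).-1) hj'.
move: h1; set s1 := size (q ^+ j); set u := ((size q).-1 * j)%N.
set v := ((size q).-1 * t.-1)%N; lia.
Qed.

Lemma size_lead_exp (R : finComUnitRingType) (g : {poly R}) j :
  lead_coef g \is a GRing.unit ->
  size (g ^+ j) = ((size g).-1 * j).+1 /\ lead_coef (g ^+ j) = lead_coef g ^+ j.
Proof.
move=> lu; have gn0 : (0 < size g)%N.
  rewrite size_poly_gt0 -lead_coef_eq0; apply: contraTneq lu => ->; by rewrite unitr0.
elim: j => [|j [IHs IHl]]; first by rewrite !expr0 size_poly1 lead_coef1 muln0.
have nz : lead_coef (g ^+ j) * lead_coef g != 0.
  rewrite IHl -exprSr; apply: contraTneq (unitrX j.+1 lu) => ->; by rewrite unitr0.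
rewrite exprSr size_proper_mul // lead_coef_proper_mul // IHs IHl -exprSr; split=> //.
have : (size g).-1.+1 = size g by lia.
move=> e; rewrite mulnS; lia.
Qed.

Lemma fpoly_eq0 (R : finComUnitRingType) r t (g : {poly R}) (a : 'I_r * 'I_t -> R) :
  size g = r.+2 -> lead_coef g \is a GRing.unit -> fpoly g a = 0 -> forall p, a p = 0.
Proof.
move=> sg lu h0 p0; apply/eqP/negPn/negP => ap0.
pose D := fun p : 'I_r * 'I_t => (p.2 * r.+1 + p.1)%N.
have Dinj : forall p q, D p = D q -> p = q.
  move=> [i j] [i' j']; rewrite /D /= => e.
  have hi : (i < r.+1)%N by apply: leqW.
  have hi' : (i' < r.+1)%N by apply: leqW.
  have e1 := congr1 (fun m => m %/ r.+1)%N e.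
  have e2 := congr1 (fun m => m %% r.+1)%N e.
  rewrite /= !divnMDl // !divn_small // !addn0 in e1.
  rewrite /= !modnMDl !modn_small // in e2.
  by congr pair; apply: val_inj.
have := @arg_maxnP _ p0 (fun p => a p != 0) D ap0.
case=> m am hmax.
have key : (fpoly g a)`_(D m) = a m * lead_coef g ^+ m.2.
  rewrite fpoly_pair coef_sum (bigD1 m) //= big1 ?addr0.
    rewrite coefZ coefMXn ltnNge leq_addl /= addnK.
    have [sz ld] := size_lead_exp m.2 lu.
    by rewrite -ld lead_coefE sz sg /= mulnC.
  move=> q qm; rewrite coefZ; have [->|aq] := eqVneq (a q) 0; first by rewrite mul0r.
  have Dq : (D q < D m)%N.
    have hq : (D q <= D m)%N := hmax q aq.
    rewrite ltn_neqAle hq andbT; apply/eqP => e.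
    by move/eqP: qm; apply; apply: Dinj.
  rewrite coefMXn; case: ifP => _; first by rewrite mulr0.
  have [sz _] := size_lead_exp q.2 lu.
  rewrite nth_default ?mulr0 // sz sg /=.
  move: Dq; rewrite /D; lia.
move: key; rewrite h0 coef0 => /esym key.
have := mulrK (unitrX m.2 lu) (a m); rewrite key mul0r => e.
by move: am; rewrite -e eqxx.
Qed.

Lemma fpoly_ext (R : finComUnitRingType) r t (g : {poly R}) (a b : 'I_r * 'I_t -> R) :
  a =1 b -> fpoly g a = fpoly g b.
Proof. by move=> e; rewrite !fpoly_pair; apply: eq_bigr => p _; rewrite e. Qed.

Lemma fpolyB (R : finComUnitRingType) r t (g : {poly R}) (a b : 'I_r * 'I_t -> R) :
  fpoly g (fun p => a p - b p) = fpoly g a - fpoly g b.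
Proof. by rewrite !fpoly_pair -sumrB; apply: eq_bigr => p _; rewrite scalerBl. Qed.

Lemma prodX_root (R : finComUnitRingType) (s : seq R) z :
  z \in s -> (\prod_(w <- s) ('X - w%:P)).[z] = 0.
Proof.
move=> zs; rewrite horner_prod (big_rem z) //= hornerXsubC subrr mul0r //.
Qed.

Theorem mainTheorem6 (R : finComUnitRingType) (r l t : nat)
  (Ab : 'I_l -> {set R}) (g : {poly R}) :
  chain_ring R -> (1 <= r)%N -> (1 <= l)%N ->
  (forall i j, i != j -> [disjoint Ab i & Ab j]) ->
  (forall i, #|Ab i| = r.+1) ->
  well_conditioned (\bigcup_(i < l) Ab i) ->
  good_poly r Ab g ->
  (1 <= t <= l)%N ->
  let n := (r.+1 * l)%N in
  let K := (r * t)%N in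
  let A := \bigcup_(i < l) Ab i in
  let pos := fun k : 'I_n => nth 0 (enum A) k in
  let C := [set \row_(k < n) (fpoly g a).[pos k] | a : {ffun 'I_r * 'I_t -> R}] in
  [/\ free_code_of_rank C K,
      #|C| = (#|R| ^ K)%N,
      (forall (j : 'I_l) (k : 'I_n), pos k \in Ab j ->
         recovering_set C k [set k' | pos k' \in Ab j :\ pos k]),
      has_locality C r
    & min_distance_is C (n - K - K %/ r + 2)%N].
Proof.
move=> hchain r1 l1 hdisj hcard hwc hgood /andP[t1 tl] n K A pos C.
have hU := wc_unit_diff hchain.1 hwc.
case: hgood => sg [lu hconst].
have hA : #|A| = n.
  rewrite /A card_bigcup_seq ?index_enum_uniq //; last first.
    by move=> i j _ _; apply: hdisj.
  rewrite /n; under eq_bigr do rewrite hcard.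
  by rewrite sum_nat_const card_ord mulnC.
have sizeA : size (enum A) = n by rewrite -cardE.
have posA k : pos k \in A by rewrite /pos -mem_enum mem_nth // sizeA.
have pos_inj : injective pos.
  move=> k1 k2 e; apply/val_inj/eqP.
  rewrite -(@nth_uniq _ 0 (enum A)) ?sizeA ?enum_uniq ?ltn_ord //; exact/eqP.
have pos_surj x : x \in A -> exists k, pos k = x.
  move=> xA; have hi : (index x (enum A) < n)%N by rewrite -sizeA index_mem mem_enum.
  by exists (Ordinal hi); rewrite /pos nth_index ?mem_enum.
have AbA j x : x \in Ab j -> x \in A by move=> xj; apply/bigcupP; exists j.
have roots (f : {poly R}) (Z : {set 'I_n}) : f != 0 ->
    (forall k, k \in Z -> f.[pos k] = 0) -> (#|Z| < size f)%N.
  move=> fn0 hZ.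
  have := max_ring_poly_roots fn0 (rs := [seq pos k | k <- enum Z]).
  rewrite size_map -cardE; apply.
  - by apply/allP => x /mapP[k kZ ->]; rewrite /root hZ // -mem_enum.
  - apply: (uniq_roots_of hU); first by rewrite map_inj_uniq ?enum_uniq.
    by move=> x /mapP[k _ ->].
have zero_lemma (a : 'I_r * 'I_t -> R) :
    (forall k, (fpoly g a).[pos k] = 0) -> forall p, a p = 0.
  move=> hz; apply: (fpoly_eq0 sg lu); apply/eqP/negPn/negP => fn0.
  have := roots _ [set: 'I_n] fn0 (fun k _ => hz k).
  rewrite cardsT card_ord => hlt.
  have := size_fpoly g a; rewrite sg /=.
  have e1 : (r.+1 * t = r.+1 * t.-1 + r.+1)%N by rewrite -mulnSr prednK.
  have e2 : (r.+1 * t <= n)%N by rewrite /n leq_mul2l tl orbT.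
  move: hlt e1 e2; set s := size _; set x := (r.+1 * t)%N; set y := (r.+1 * t.-1)%N.
  lia.
pose ev (f : {poly R}) := \row_(k < n) f.[pos k].
have evfe (a b : 'I_r * 'I_t -> R) : a =1 b -> ev (fpoly g a) = ev (fpoly g b).
  by move=> e; rewrite (fpoly_ext g e).
have inj_ev : injective (fun a : {ffun 'I_r * 'I_t -> R} => ev (fpoly g a)).
  move=> a1 a2 /= e; apply/ffunP => p; apply/eqP; rewrite -subr_eq0; apply/eqP.
  apply: (zero_lemma (fun p => a1 p - a2 p)) => k.
  have := congr1 (fun M : 'rV_n => M 0 k) e; rewrite /= !mxE => e'.
  by rewrite fpolyB hornerD hornerN e' subrr.
have cardC : #|C| = (#|R| ^ K)%N.
  by rewrite card_imset // card_ffun card_prod !card_ord.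
have cK : #|{: 'I_r * 'I_t}| = K by rewrite card_prod !card_ord.
pose phi := fun k : 'I_K => enum_val (cast_ord (esym cK) k).
pose psi := fun p : 'I_r * 'I_t => cast_ord cK (enum_rank p).
have phiK : cancel psi phi by move=> p; rewrite /phi /psi cast_ordK enum_rankK.
have psiK : cancel phi psi by move=> k; rewrite /phi /psi enum_valK cast_ordKV.
pose B := fun k : 'I_K => ev (g ^+ (phi k).2 * 'X^((phi k).1)).
have sumB (u : 'I_K -> R) : \sum_(k < K) u k *: B k = ev (fpoly g (fun p => u (psi p))).
  apply/rowP => k'; rewrite summxE !mxE fpoly_pair horner_sum.
  rewrite [RHS](reindex phi); last by exists psi => x _; [apply: psiK | apply: phiK].
  by apply: eq_bigr => k _; rewrite !mxE hornerZ psiK.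
have free : free_code_of_rank C K.
  exists B; split.
  - move=> c; split.
    + case/imsetP => a _ ->; exists (fun k => a (phi k)); rewrite sumB.
      by apply: evfe => p /=; rewrite phiK.
    + case=> u ->; rewrite sumB; apply/imsetP; exists [ffun p => u (psi p)] => //.
      by apply: evfe => p; rewrite ffunE.
  - move=> u h0 k; rewrite -(psiK k); apply: (zero_lemma (fun p => u (psi p))) => k'.
    rewrite sumB in h0.
    by have := congr1 (fun M : 'rV_n => M 0 k') h0; rewrite /= !mxE.
have cardS j k : pos k \in Ab j -> #|[set k' | pos k' \in Ab j :\ pos k]| = r.
  move=> hk; rewrite -(card_imset _ pos_inj).
  have -> : pos @: [set k' | pos k' \in Ab j :\ pos k] = Ab j :\ pos k.
    apply/setP => x; apply/imsetP/idP => [[k' k'S ->]|hx]; first by rewrite inE in k'S.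
    have xA : x \in A by apply: (AbA j); move: hx; rewrite !inE => /andP[].
    by have [k' ek] := pos_surj x xA; exists k'; [rewrite inE ek | rewrite ek].
  by have := cardsD1 (pos k) (Ab j); rewrite hk hcard add1n => -[].
have rec_key j k (a : 'I_r * 'I_t -> R) : pos k \in Ab j ->
    (forall k', k' \in [set k' | pos k' \in Ab j :\ pos k] -> (fpoly g a).[pos k'] = 0) ->
    (fpoly g a).[pos k] = 0.
  move=> hk hS; set c0 := g.[pos k].
  have eqh x : x \in Ab j -> (fpoly g a).[x] = (fpoly c0%:P a).[x].
    by move=> hx; rewrite fpoly_const (hconst j x (pos k) hx hk).
  rewrite eqh //; have [->|hn0] := eqVneq (fpoly c0%:P a) 0; first by rewrite horner0.
  have := roots _ [set k' | pos k' \in Ab j :\ pos k] hn0.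
  rewrite cardS // => hlt'.
  have hlt : (r < size (fpoly c0%:P a))%N.
    apply: hlt' => k' hk'; rewrite -eqh ?hS //; by move: hk'; rewrite !inE => /andP[].
  have hs := size_polyC_leq1 c0; have := size_fpoly (c0%:P) a.
  have -> : (size c0%:P).-1 = 0%N by case: (size c0%:P) hs => [|[]].
  rewrite mul0n add0n => h2; move: hlt h2; lia.
have recov : forall (j : 'I_l) (k : 'I_n), pos k \in Ab j ->
    recovering_set C k [set k' | pos k' \in Ab j :\ pos k].
  move=> j k hk; split; first by rewrite !inE eqxx.
  set S := [set k' | _].
  have kS : k \notin S by rewrite !inE eqxx.
  pose h := fun M : 'rV[R]_n => \row_(k' < n) (if k' == k then 0 else M 0 k').
  have e : puncture C S = h @: puncture C (k |: S).
    rewrite /puncture -[in RHS]imset_comp; apply: eq_imset => c; apply/rowP => k'.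
    rewrite !mxE /= in_setU1; case: (eqVneq k' k) => [->|//]; by rewrite (negbTE kS).
  rewrite e card_in_imset //.
  move=> M1 M2 /imsetP[c1 c1C ->] /imsetP[c2 c2C ->].
  case/imsetP: c1C => a1 _ ->; case/imsetP: c2C => a2 _ -> eh.
  have ent k' : k' != k -> (if k' \in k |: S then (fpoly g a1).[pos k'] else 0) =
      (if k' \in k |: S then (fpoly g a2).[pos k'] else 0).
    by move=> kk'; have := congr1 (fun M : 'rV_n => M 0 k') eh; rewrite !mxE (negbTE kk').
  have hk0 : (fpoly g a1).[pos k] = (fpoly g a2).[pos k].
    have := rec_key j k (fun p => a1 p - a2 p) hk.
    rewrite (fpolyB g a1 a2) hornerD hornerN => h0; apply/eqP; rewrite -subr_eq0; apply/eqP.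
    apply: h0 => k' k'S; rewrite hornerD hornerN.
    have kk' : k' != k by apply: contraNneq kS => <-.
    by have := ent k' kk'; rewrite inE k'S orbT => ->; rewrite subrr.
  apply/rowP => k'; rewrite !mxE; case: (eqVneq k' k) => [->|kk']; first by rewrite hk0.
  exact: ent.
have loc : has_locality C r.
  move=> i; have := posA i; case/bigcupP => j _ hj.
  by exists [set k' | pos k' \in Ab j :\ pos i]; split; [rewrite cardS | exact: recov].
have eK : (K %/ r = t)%N by rewrite /K mulKn.
have e1 : (r.+1 * t = r.+1 * t.-1 + r.+1)%N by rewrite -mulnSr prednK.
have e2 : (r.+1 * t <= n)%N by rewrite /n leq_mul2l tl orbT.
have e3 : (r.+1 * t = K + t)%N by rewrite /K mulSn addnC.
have wtZ (f : {poly R}) (Z : {set 'I_n}) :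
    (forall k, k \in Z -> f.[pos k] = 0) -> (wt (ev f) <= n - #|Z|)%N.
  move=> hZ; rewrite /wt; apply: leq_trans (_ : #|~: Z| <= _)%N.
    apply: subset_leq_card; apply/subsetP => k; rewrite !inE mxE; apply: contra => kZ.
    by rewrite hZ.
  by rewrite (cardsCs (~: Z)) setCK card_ord.
have lower : forall c, c \in C -> c != 0 -> (n - K - K %/ r + 2 <= wt c)%N.
  move=> c /imsetP[a _ ->] cn0.
  have fn0 : fpoly g a != 0.
    by apply: contraNneq cn0 => e; apply/eqP/rowP => k; rewrite !mxE e horner0.
  pose Z := [set k : 'I_n | (fpoly g a).[pos k] == 0].
  have hZ : (#|Z| < size (fpoly g a))%N by apply: roots fn0 _ => k; rewrite inE => /eqP.
  have hw : wt (ev (fpoly g a)) = (n - #|Z|)%N.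
    rewrite /wt; have -> : [set k | (ev (fpoly g a)) 0 k != 0] = ~: Z.
      by apply/setP => k; rewrite !inE mxE.
    by rewrite (cardsCs (~: Z)) setCK card_ord.
  rewrite hw eK; have := size_fpoly g a; rewrite sg /= => hs.
  move: hZ hs e1 e2 e3; set s1 := size _; set x := (r.+1 * t)%N; set y := (r.+1 * t.-1)%N.
  clearbody x y s1 n K; move: #|Z| => z; lia.
have tl' : (t.-1 < l)%N by lia.
pose jt := Ordinal tl'.
have wle : (t.-1 <= l)%N by lia.
pose wd := fun w : 'I_t.-1 => widen_ord wle w.
pose cv := fun j : 'I_l => g.[nth 0 (enum (Ab j)) 0].
have cvin j : nth 0 (enum (Ab j)) 0 \in Ab j by rewrite -mem_enum mem_nth // -cardE hcard.
pose cs := [seq cv (wd w) | w <- enum 'I_t.-1].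
pose Fp := \prod_(z <- cs) ('X - z%:P).
pose bs := take r.-1 (enum (Ab jt)).
pose Gp := \prod_(z <- bs) ('X - z%:P).
have sF : size Fp = t by rewrite size_prod_XsubC size_map size_enum_ord; lia.
have sbs : size bs = r.-1.
  by rewrite size_take -cardE hcard ifT //; lia.
have sG : size Gp = r by rewrite size_prod_XsubC sbs; lia.
pose a := [ffun p : 'I_r * 'I_t => Gp`_(p.1) * Fp`_(p.2)].
have eva y : (fpoly g a).[y] = Gp.[y] * Fp.[g.[y]].
  rewrite horner_fpoly (horner_coef_wide y (eq_leq sG)).
  rewrite (horner_coef_wide g.[y] (eq_leq sF)) mulr_suml.
  rewrite (eq_bigr _ (fun i _ => mulr_sumr _ _ _ _)) pair_big /=.
  by apply: eq_bigr => -[i j] _; rewrite ffunE /=; ring.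
have hr : (r.-1 < r)%N by lia.
have ht : (t.-1 < t)%N by lia.
pose pm : 'I_r * 'I_t := (Ordinal hr, Ordinal ht).
have apm : a pm = 1.
  have mG : Gp \is monic by apply: monic_prod_XsubC.
  have mF : Fp \is monic by apply: monic_prod_XsubC.
  rewrite ffunE /=; move: (monicP mG) (monicP mF); rewrite !lead_coefE sG sF.
  by move=> -> ->; rewrite mulr1.
pose Xs := (\bigcup_(w < t.-1) Ab (wd w)) :|: [set z in bs].
pose Zs := [set k : 'I_n | pos k \in Xs].
have zeros k : k \in Zs -> (fpoly g a).[pos k] = 0.
  rewrite inE eva inE => /orP[/bigcupP[w _ hw] | hb].
    rewrite (hconst (wd w) _ _ hw (cvin _)) (@prodX_root _ cs) ?mulr0 //.
    by apply/mapP; exists w; rewrite ?mem_enum.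
  by rewrite (@prodX_root _ bs) ?mul0r //; rewrite inE in hb.
have bsjt z : z \in bs -> z \in Ab jt by move/mem_take; rewrite mem_enum.
have cardZs : #|Zs| = (t.-1 * r.+1 + r.-1)%N.
  rewrite -(card_imset _ pos_inj).
  have -> : pos @: Zs = Xs.
    apply/setP => x; apply/imsetP/idP => [[k kZ ->]|hx]; first by rewrite inE in kZ.
    have xA : x \in A.
      move: hx; rewrite inE => /orP[/bigcupP[w _ hw] | hb]; first exact: (AbA (wd w)).
      by apply: (AbA jt); apply: bsjt; rewrite inE in hb.
    by have [k ek] := pos_surj x xA; exists k; [rewrite inE ek | rewrite ek].
  have wdn w : wd w != jt by rewrite -val_eqE /= neq_ltn ltn_ord.
  have -> : #|Xs| = (#|\bigcup_(w < t.-1) Ab (wd w)| + #|[set z in bs]|)%N.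
    apply/eqP; rewrite (leq_card_setU _ _).2.
    rewrite disjoint_sym; apply: bigcup_disjoint => w _.
    apply: (@disjointWl _ _ (Ab jt)); first by apply/subsetP => z; rewrite inE => /bsjt.
    by apply: hdisj; rewrite eq_sym.
  rewrite card_bigcup_seq ?index_enum_uniq //; last first.
    move=> w w' _ _ ww; apply: hdisj; apply: contra ww => /eqP e.
    by apply/eqP/val_inj; move: e => /(congr1 val).
  under eq_bigr do rewrite hcard.
  rewrite sum_nat_const card_ord cardsE -sbs; congr addn.
  apply/card_uniqP; apply: take_uniq; exact: enum_uniq.
pose c0 := ev (fpoly g a).
have c0C : c0 \in C by apply/imsetP; exists a.
have c0n0 : c0 != 0.
  apply/eqP => e0; have := zero_lemma a _ pm; rewrite apm => h.
  by move/eqP: (oner_neq0 R); apply; apply: h => k;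
    have := congr1 (fun M : 'rV_n => M 0 k) e0; rewrite !mxE.
have wc0 : (wt c0 <= n - #|Zs|)%N by apply: wtZ; exact: zeros.
have lc0 := lower c0 c0C c0n0.
split=> //; split; last exact: lower.
exists c0 => //; split=> //; apply/eqP; rewrite eqn_leq lc0 andbT.
apply: leq_trans wc0 _; rewrite cardZs eK.
move: e1 e2 e3; set x := (r.+1 * t)%N; set y := (r.+1 * t.-1)%N.
have : (t.-1 * r.+1 = y)%N by rewrite /y mulnC.
move=> ->; clearbody x y n K; lia.
Qed.
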